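(* Let $(A,I)$ be a perfect prism with Frobenius $\varphi$. Let $x\in A$ be such that $\varphi(x)=x^p(1+py)$ for some $y\in A$. Then \[x=[a]\prod_{i=1}^{\infty}\bigl(1+p\varphi^{-i}(y)\bigr)^{p^{i-1}},\] where $a\in A/p$ is the reduction of $x$ modulo $p$ and $[a]\in A=W(A/p)$ is its Teichmüller lift.
   Context: For a perfect prism $(A,I)$, $A$ is $p$-torsion free and classically $p$-complete with $A/p$ perfect, so $A=W(A/p)$, $\varphi$ is an automorphism, and the infinite product converges $p$-adically. *)

(* Defs.v *)
From HB Require Import structures.
From mathcomp Require Import all_boot all_order all_algebra.
Set Implicit Arguments. Unset Strict Implicit. Unset Printing Implicit Defensive.
Import GRing.Theory.
Local Open Scope ring_scope.

Section PAdic.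
Variables (p : nat) (A : comPzRingType).

Definition pdiv (n : nat) (a : A) : Prop := exists b : A, a = (p%:R ^+ n) * b.

Definition p_torsion_free : Prop := forall a : A, p%:R * a = 0 -> a = 0.

Definition padic_separated : Prop :=
  forall a : A, (forall n, pdiv n a) -> a = 0.
Definition padic_complete : Prop :=
  forall u : nat -> A, (forall n, pdiv n (u n.+1 - u n)) ->
    exists l : A, forall n, pdiv n (l - u n).

Definition padic_lim (u : nat -> A) (l : A) : Prop :=
  forall n, exists N, forall m, (N <= m)%N -> pdiv n (u m - l).

Definition modp_perfect : Prop :=
  (forall a : A, pdiv 1 (a ^+ p) -> pdiv 1 a) /\
  (forall a : A, exists b : A, pdiv 1 (a - b ^+ p)).

Definition frob_lift (phi : A -> A) : Prop :=
  forall a : A, pdiv 1 (phi a - a ^+ p).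

(* t is the Teichmuller lift [a] of the reduction a of x modulo p:
   [a] = lim_n z_n^(p^n) for any lifts z_n of a^(1/p^n); precisely
   t = z^(p^n) mod p^(n+1) whenever z^(p^n) = x mod p. *)
Definition teich_lift (x t : A) : Prop :=
  forall (n : nat) (z : A), pdiv 1 (z ^+ (p ^ n) - x) ->
    pdiv n.+1 (t - z ^+ (p ^ n)).

End PAdic.

(* Main.v *)
Set Warnings "-all".
Require Import Defs.
From HB Require Import structures.
From mathcomp Require Import all_boot all_order all_algebra.
From mathcomp Require Import ring.
Set Warnings "-all".
Import GRing.Theory.
Local Open Scope ring_scope.

Section Aux.
Variables (p : nat) (A : comPzRingType).
Hypothesis hp : prime p.
Local Notation pd := (@Defs.pdiv p A).

Lemma pd0 n : pd n 0. Proof. by exists 0; rewrite mulr0. Qed.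
Lemma pdD n a b : pd n a -> pd n b -> pd n (a + b).
Proof. by move=> [c ->] [d ->]; exists (c + d); rewrite mulrDr. Qed.
Lemma pdN n a : pd n a -> pd n (- a).
Proof. by move=> [c ->]; exists (- c); rewrite mulrN. Qed.
Lemma pdB n a b : pd n a -> pd n b -> pd n (a - b).
Proof. by move=> ha hb; apply: pdD => //; apply: pdN. Qed.
Lemma pdMl n c a : pd n a -> pd n (c * a).
Proof. by move=> [d ->]; exists (c * d); rewrite mulrCA. Qed.
Lemma pdMr n c a : pd n a -> pd n (a * c).
Proof. by move=> h; rewrite mulrC; apply: pdMl. Qed.
Lemma pdW m n a : (m <= n)%N -> pd n a -> pd m a.
Proof.
move=> hmn [c ->]; exists (p%:R ^+ (n - m) * c).
by rewrite mulrA -exprD subnKC.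
Qed.
Lemma pdM m n a b : pd m a -> pd n b -> pd (m + n) (a * b).
Proof. by move=> [c ->] [d ->]; exists (c * d); rewrite exprD; ring. Qed.
Lemma pd_p a : pd 1 (p%:R * a). Proof. by exists a; rewrite expr1. Qed.
Lemma pd_sum n m (F : 'I_m -> A) : (forall i, pd n (F i)) -> pd n (\sum_(i < m) F i).
Proof. move=> h; apply: (big_ind (pd n)) => //; [exact: pd0 | exact: pdD]. Qed.

Lemma pd_XX a b i : pd 1 (a - b) -> pd 1 (a ^+ i - b ^+ i).
Proof. by move=> h; rewrite subrXX; apply: pdMr. Qed.

Lemma pd_key k a b : pd k.+1 (a - b) -> pd k.+2 (a ^+ p - b ^+ p).
Proof.
move=> h; rewrite subrXX -addn1; apply: pdM => //.
have h1 : pd 1 (a - b) by apply: (@pdW 1 k.+1)...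
have -> : \sum_(i < p) a ^+ (p.-1 - i) * b ^+ i =
   \sum_(i < p) (a ^+ (p.-1 - i) - b ^+ (p.-1 - i)) * b ^+ i
   + \sum_(i < p) b ^+ (p.-1 - i) * b ^+ i.
  by rewrite -big_split /=; apply: eq_bigr => i _; rewrite mulrBl subrK.
apply: pdD; first by apply: pd_sum => i; apply: pdMr; apply: pd_XX.
have -> : \sum_(i < p) b ^+ (p.-1 - i) * b ^+ i = \sum_(i < p) b ^+ p.-1.
  apply: eq_bigr => i _; rewrite -exprD subnK //.
  by rewrite -ltnS prednK ?prime_gt0.
by rewrite sumr_const card_ord -mulr_natl; apply: pd_p.
Qed.

Lemma pd_iter n a b : pd 1 (a - b) -> pd n.+1 (a ^+ (p ^ n) - b ^+ (p ^ n)).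
Proof.
move=> h; elim: n => [|n IH]; first by rewrite expn0 !expr1.
by rewrite expnSr !exprM; apply: pd_key.
Qed.

Lemma pd_frobD u v : pd 1 ((u + v) ^+ p - (u ^+ p + v ^+ p)).
Proof.
have p0 := prime_gt0 hp.
suff H : forall q, q.+1 = p -> pd 1 ((u + v) ^+ q.+1 - (u ^+ q.+1 + v ^+ q.+1)).
  by have := H p.-1 (prednK p0); rewrite prednK.
move=> q eq.
rewrite exprDn big_ord_recr big_ord_recl /= subnn binn bin0 subn0 !expr0 !mulr1n mulr1 mul1r.
have -> : forall s : A, u ^+ q.+1 + s + v ^+ q.+1 - (u ^+ q.+1 + v ^+ q.+1) = s by move=> s; ring.
apply: pd_sum => i.
have hi : (0 < (lift ord0 i : nat) < p)%N.
  by rewrite -eq /= /bump /= add1n ltnS ltn_ord.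
move: (prime_dvd_bin hp hi) => /dvdnP [k hk].
have hk' : 'C(q.+1, lift ord0 i) = (k * p)%N by move: hk; rewrite -eq.
by rewrite hk' mulrnA -mulr_natl; apply: pd_p.
Qed.

Hypothesis hinj : forall a : A, pd 1 (a ^+ p) -> pd 1 a.

Lemma pd_frobinj a b : pd 1 (a ^+ p - b ^+ p) -> pd 1 (a - b).
Proof.
move=> h; apply: hinj.
have h1 := pd_frobD a (- b).
have h2 := pd_frobD (- b) b.
have z : (0:A) ^+ p = 0 by rewrite expr0n eqn0Ngt prime_gt0.
rewrite addNr z in h2.
have -> : (a - b) ^+ p = ((a - b) ^+ p - (a ^+ p + (- b) ^+ p)) + (a ^+ p - b ^+ p)
   - (0 - ((- b) ^+ p + b ^+ p)) by ring.
by apply: pdB => //; apply: pdD.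
Qed.

Lemma pd_frobinj_iter n a b : pd 1 (a ^+ (p ^ n) - b ^+ (p ^ n)) -> pd 1 (a - b).
Proof.
elim: n => [|n IH]; first by rewrite expn0 !expr1.
by rewrite expnSr !exprM => h; apply: IH; apply: pd_frobinj.
Qed.

End Aux.


Theorem lemma2p12 (p : nat) (A : comPzRingType)
    (phi : {rmorphism A -> A}) (phiinv : A -> A)
    (hp : prime p)
    (htf : p_torsion_free p A)
    (hsep : padic_separated p A) (hcomp : padic_complete p A)
    (hperf : modp_perfect p A)
    (hlift : frob_lift p phi)
    (hK1 : cancel phi phiinv) (hK2 : cancel phiinv phi)
    (x y : A) (hxy : phi x = x ^+ p * (1 + p%:R * y)) :
  (exists t : A, teich_lift p x t) /\
  (forall t : A, teich_lift p x t ->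
     exists P : A,
       padic_lim p
         (fun N => \prod_(i < N) (1 + p%:R * iter i.+1 phiinv y) ^+ (p ^ i)) P
       /\ x = t * P).
Proof.
have hinv : forall a b, phiinv (a ^+ p * (1 + p%:R * b)) = (phiinv a) ^+ p * (1 + p%:R * phiinv b).
  move=> a b.
  have -> : a ^+ p * (1 + p%:R * b) = phi ((phiinv a) ^+ p * (1 + p%:R * phiinv b)).
    by rewrite rmorphM rmorphXn rmorphD rmorph1 rmorphM rmorph_nat !hK2.
  by rewrite hK1.
have hinvk : forall k a b, iter k phiinv (a ^+ p * (1 + p%:R * b)) =
    (iter k phiinv a) ^+ p * (1 + p%:R * iter k phiinv b).
  by move=> k a b; elim: k => [|k IH] //=; rewrite IH hinv.
pose xs k := iter k phiinv x.
pose w k := iter k phiinv y.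
pose Q N := \prod_(i < N) (1 + p%:R * w i.+1) ^+ (p ^ i).
have step : forall N, xs N = xs N.+1 ^+ p * (1 + p%:R * w N.+1).
  move=> N; rewrite /xs /w -hinvk -hxy iterSr hK1 //.
have QS : forall N, Q N.+1 = Q N * (1 + p%:R * w N.+1) ^+ (p ^ N).
  by move=> N; rewrite /Q big_ord_recr.
have decomp : forall N, x = xs N ^+ (p ^ N) * Q N.
  elim=> [|N IH]; first by rewrite /Q big_ord0 expn0 expr1 mulr1.
  rewrite QS {1}IH (step N) exprMn expnS exprM; ring.
have hp1 : forall a b, @Defs.pdiv p A 1 (a - a * (1 + p%:R * b)).
  move=> a b; have -> : a - a * (1 + p%:R * b) = p%:R * (- (a * b)) by ring.
  exact: pd_p.
have hF : forall N k, @Defs.pdiv p A N.+1 ((1 + p%:R * k) ^+ (p ^ N) - 1).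
  move=> N k; have h := @pd_iter p A hp N (1 + p%:R * k) 1.
  rewrite expr1n in h; apply: h.
  have -> : 1 + p%:R * k - 1 = p%:R * k by ring.
  exact: pd_p.
have Q1 : forall N, @Defs.pdiv p A 1 (Q N - 1).
  elim=> [|N IH]; first by rewrite /Q big_ord0 subrr; exact: pd0.
  rewrite QS.
  have -> : Q N * (1 + p%:R * w N.+1) ^+ (p ^ N) - 1 =
     (Q N - 1) * (1 + p%:R * w N.+1) ^+ (p ^ N) + ((1 + p%:R * w N.+1) ^+ (p ^ N) - 1) by ring.
  apply: pdD; first exact: pdMr.
  exact: (@pdW p A 1 N.+1).
have xsmod : forall N, @Defs.pdiv p A 1 (xs N ^+ (p ^ N) - x).
  move=> N; rewrite {1}(decomp N).
  have -> : xs N ^+ (p ^ N) - xs N ^+ (p ^ N) * Q N = - (xs N ^+ (p ^ N) * (Q N - 1)) by ring.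
  by apply: pdN; apply: pdMl.
have Qstep : forall N, @Defs.pdiv p A N.+1 (Q N.+1 - Q N).
  move=> N; rewrite QS.
  have -> : Q N * (1 + p%:R * w N.+1) ^+ (p ^ N) - Q N = Q N * ((1 + p%:R * w N.+1) ^+ (p ^ N) - 1) by ring.
  exact: pdMl.
have hinj := hperf.1.
split.
  pose u n := xs n ^+ (p ^ n).
  have hu : forall n, @Defs.pdiv p A n.+1 (u n.+1 - u n).
    move=> n; rewrite /u expnS exprM; apply: (@pd_iter p A hp).
    rewrite {1}(step n); exact: hp1.
  have [l hl] : exists l, forall n, @Defs.pdiv p A n (l - u n).
    by apply: hcomp => n; apply: (@pdW p A n n.+1).
  have hl' : forall n, @Defs.pdiv p A n.+1 (l - u n).
    move=> n; have -> : l - u n = (l - u n.+1) + (u n.+1 - u n) by ring.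
    exact: pdD.
  exists l => n z hz.
  have hz1 : @Defs.pdiv p A 1 (z ^+ (p ^ n) - u n).
    have -> : z ^+ (p ^ n) - u n = (z ^+ (p ^ n) - x) - (u n - x) by ring.
    by apply: pdB => //; apply: xsmod.
  have hz2 : @Defs.pdiv p A 1 (z - xs n) by apply: (@pd_frobinj_iter p A hp hinj _ _ _ hz1).
  have hz3 := @pd_iter p A hp n _ _ hz2.
  have -> : l - z ^+ (p ^ n) = (l - u n) - (z ^+ (p ^ n) - u n) by ring.
  by apply: pdB => //; apply: hl'.
move=> t ht.
have [P hP] : exists P, forall n, @Defs.pdiv p A n (P - Q n).
  by apply: hcomp => n; apply: (@pdW p A n n.+1).
exists P; split.
  move=> n; exists n => m hm.
  change (@Defs.pdiv p A n (Q m - P)).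
  apply: (@pdW p A n m) => //.
  rewrite -opprB; exact: pdN.
apply/eqP; rewrite -subr_eq0; apply/eqP; apply: hsep => n.
have h1 := ht n (xs n) (xsmod n).
have -> : x - t * P = - ((t - xs n ^+ (p ^ n)) * Q n) - t * (P - Q n).
  by rewrite {1}(decomp n); ring.
apply: pdB; last exact: pdMl.
by apply: pdN; apply: pdMr; apply: (@pdW p A n n.+1).
Qed.
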